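(* Let $P$ be a closed polygonal curve embedded in $\mathbb{R}^3$, whose knot type $K$ has genus $g(K)$. If $t$ is the number of triangles in a triangulated oriented PL surface $\Sigma$ embedded in $\mathbb{R}^3$ whose boundary is a PL subdivision of $P$, then $t \ge 4g(K) + 1$.
   Context: The genus $g(K)$ of a knot $K$ is the minimal genus of a compact connected orientable surface embedded in $\mathbb{R}^3$ whose boundary is the knot. A triangulated PL surface is a 2-dimensional simplicial complex, realized linearly on each triangle in $\mathbb{R}^3$, which is a 2-manifold with boundary. ''Boundary is a PL subdivision of $P$'' means the manifold boundary of the surface is $P$ as a set, possibly with extra vertices inserted on the edges of $P$. *)

(* Defs.v *)
From Stdlib Require Import Reals List Arith ZArith Relations Bool.
Import ListNotations.
Open Scope R_scope.

Record pt := mkpt { px : R; py : R; pz : R }.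

Definition padd (p q : pt) : pt := mkpt (px p + px q) (py p + py q) (pz p + pz q).
Definition pscale (r : R) (p : pt) : pt := mkpt (r * px p) (r * py p) (r * pz p).
Definition psub (p q : pt) : pt := padd p (pscale (-1) q).
Definition origin : pt := mkpt 0 0 0.
Definition cross (u v : pt) : pt :=
  mkpt (py u * pz v - pz u * py v) (pz u * px v - px u * pz v) (px u * py v - py u * px v).

Definition lincomb (w : list R) (l : list pt) : pt :=
  fold_right (fun rp acc => padd (pscale (fst rp) (snd rp)) acc) origin (combine w l).

Definition in_hull (l : list pt) (x : pt) : Prop :=
  exists w : list R, length w = length l /\ Forall (fun r => 0 <= r) w /\
    fold_right Rplus 0 w = 1 /\ x = lincomb w l.

Definition in_seg (a b x : pt) : Prop := in_hull [a; b] x.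

Definition noncollinear (a b c : pt) : Prop := cross (psub b a) (psub c a) <> origin.

Definition pvert (Q : list pt) (i : nat) : pt := nth (i mod length Q) Q origin.

Definition polygon_set (Q : list pt) (x : pt) : Prop :=
  exists i, (i < length Q)%nat /\ in_seg (pvert Q i) (pvert Q (S i)) x.

Definition embedded_polygon (Q : list pt) : Prop :=
  let m := length Q in
  (3 <= m)%nat /\
  (forall i j, (i < m)%nat -> (j < m)%nat -> i <> j -> pvert Q i <> pvert Q j) /\
  (forall i j, (i < m)%nat -> (j < m)%nat -> i <> j ->
     forall x, in_seg (pvert Q i) (pvert Q (S i)) x ->
               in_seg (pvert Q j) (pvert Q (S j)) x ->
       (j = (S i) mod m /\ x = pvert Q j) \/ (i = (S j) mod m /\ x = pvert Q i)).

(** Elementary Delta-move (Reidemeister): insert a new vertex [c] between the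
    consecutive vertices [a = Q_i] and [b = Q_(i+1)] where the triangle [abc]
    meets the polygon exactly in the edge [ab]. *)
Definition delta_insert (Q Q' : list pt) : Prop :=
  exists i c, (i < length Q)%nat /\
    Q' = firstn (S i) Q ++ c :: skipn (S i) Q /\
    (forall x, (in_hull [pvert Q i; pvert Q (S i); c] x /\ polygon_set Q x) <->
               in_seg (pvert Q i) (pvert Q (S i)) x).

Definition poly_rotate (Q Q' : list pt) : Prop :=
  exists k, Q' = skipn k Q ++ firstn k Q.

Definition knot_step (Q Q' : list pt) : Prop :=
  embedded_polygon Q /\ embedded_polygon Q' /\
  (delta_insert Q Q' \/ poly_rotate Q Q' \/ Q' = rev Q).

Definition knot_equiv : list pt -> list pt -> Prop := clos_refl_sym_trans _ knot_step.

(** * Triangulated PL surfaces in R^3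
    A surface is given by a number [nv] of vertices, their positions [vert]
    (indices [0..nv-1]) and a list of triangles (triples of vertex indices). *)
Definition tri_list (T : nat * nat * nat) : list nat :=
  match T with (a, b, c) => [a; b; c] end.

Definition tri_has (T : nat * nat * nat) (v : nat) : bool :=
  existsb (Nat.eqb v) (tri_list T).

Definition common_verts (T1 T2 : nat * nat * nat) : list nat :=
  filter (tri_has T2) (tri_list T1).

Definition edge_count (tris : list (nat * nat * nat)) (a b : nat) : nat :=
  length (filter (fun T => andb (tri_has T a) (tri_has T b)) tris).

Definition link_adj (tris : list (nat * nat * nat)) (v x y : nat) : Prop :=
  exists T, In T tris /\ tri_has T v = true /\ tri_has T x = true /\
            tri_has T y = true /\ x <> v /\ y <> v /\ x <> y.

Definition is_tri_surface (nv : nat) (vert : nat -> pt)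
    (tris : list (nat * nat * nat)) : Prop :=
  (forall a b c, In (a, b, c) tris ->
     (a < nv)%nat /\ (b < nv)%nat /\ (c < nv)%nat /\
     noncollinear (vert a) (vert b) (vert c)) /\
  (forall u v, (u < nv)%nat -> (v < nv)%nat -> vert u = vert v -> u = v) /\
  (forall v, (v < nv)%nat -> exists T, In T tris /\ tri_has T v = true) /\
  (forall i j, (i < length tris)%nat -> (j < length tris)%nat -> i <> j ->
     exists v, tri_has (nth i tris (0,0,0)%nat) v <> tri_has (nth j tris (0,0,0)%nat) v) /\
  (* linear realization is a geometric simplicial complex (embedded) *)
  (forall T1 T2, In T1 tris -> In T2 tris -> forall x,
     (in_hull (map vert (tri_list T1)) x /\ in_hull (map vert (tri_list T2)) x) <->
     in_hull (map vert (common_verts T1 T2)) x) /\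
  (* 2-manifold with boundary: every edge lies in at most two triangles and
     the link of every vertex is connected (hence an arc or a circle) *)
  (forall a b, a <> b -> (edge_count tris a b <= 2)%nat) /\
  (forall v x y, (v < nv)%nat -> v <> x -> v <> y ->
     (0 < edge_count tris v x)%nat -> (0 < edge_count tris v y)%nat ->
     clos_refl_trans _ (link_adj tris v) x y).

Definition surface_boundary (vert : nat -> pt) (tris : list (nat * nat * nat))
    (x : pt) : Prop :=
  exists a b, a <> b /\ edge_count tris a b = 1%nat /\ in_seg (vert a) (vert b) x.

Definition dir_edges (T : nat * nat * nat) (o : bool) : list (nat * nat) :=
  match T with (a, b, c) =>
    if o then [(a, b); (b, c); (c, a)] else [(b, a); (c, b); (a, c)] end.

Definition oriented_surface (tris : list (nat * nat * nat)) : Prop :=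
  exists o : nat -> bool,
    forall i j, (i < length tris)%nat -> (j < length tris)%nat -> i <> j ->
      forall e, In e (dir_edges (nth i tris (0,0,0)%nat) (o i)) ->
                ~ In e (dir_edges (nth j tris (0,0,0)%nat) (o j)).

Definition connected_surface (nv : nat) (tris : list (nat * nat * nat)) : Prop :=
  forall a b, (a < nv)%nat -> (b < nv)%nat ->
    clos_refl_trans _ (fun x y => exists T, In T tris /\ tri_has T x = true /\
                                            tri_has T y = true) a b.

Definition pair_eq_dec : forall x y : nat * nat, {x = y} + {x <> y}.
Proof. decide equality; apply Nat.eq_dec. Defined.

Definition unord_edges (T : nat * nat * nat) : list (nat * nat) :=
  match T with (a, b, c) =>
    [(Nat.min a b, Nat.max a b); (Nat.min b c, Nat.max b c); (Nat.min a c, Nat.max a c)] end.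

Definition num_edges (tris : list (nat * nat * nat)) : nat :=
  length (nodup pair_eq_dec (flat_map unord_edges tris)).

Definition euler_char (nv : nat) (tris : list (nat * nat * nat)) : Z :=
  (Z.of_nat nv - Z.of_nat (num_edges tris) + Z.of_nat (length tris))%Z.

(** genus of a compact connected orientable surface with ONE boundary
    component: chi = 2 - 2g - 1 *)
Definition genus1 (nv : nat) (tris : list (nat * nat * nat)) : Z :=
  ((1 - euler_char nv tris) / 2)%Z.

Definition seifert_surface (Q : list pt) (nv : nat) (vert : nat -> pt)
    (tris : list (nat * nat * nat)) : Prop :=
  is_tri_surface nv vert tris /\ oriented_surface tris /\
  connected_surface nv tris /\
  (forall x, surface_boundary vert tris x <-> polygon_set Q x).

Definition is_knot_genus (P : list pt) (g : Z) : Prop :=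
  (exists Q nv vert tris, knot_equiv P Q /\ seifert_surface Q nv vert tris /\
                          genus1 nv tris = g) /\
  (forall Q nv vert tris, knot_equiv P Q -> seifert_surface Q nv vert tris ->
                          (g <= genus1 nv tris)%Z).

(* Main.v *)
Require Import Defs.
From Stdlib Require Import Reals List Arith ZArith Relations Lra Lia Bool Classical ClassicalEpsilon.
Import ListNotations.


Open Scope R_scope.

Lemma pt_ext (p q : pt) : px p = px q -> py p = py q -> pz p = pz q -> p = q.
Proof. destruct p, q; simpl; intros; subst; reflexivity. Qed.

Lemma in_seg_iff a b x : in_seg a b x <-> exists l, 0 <= l <= 1 /\
  px x = px a + l * (px b - px a) /\ py x = py a + l * (py b - py a) /\
  pz x = pz a + l * (pz b - pz a).
Proof.
  unfold in_seg, in_hull; split.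
  - intros [w [Hl [Hf [Hs Hx]]]].
    destruct w as [|w1 [|w2 [|w3 w]]]; simpl in Hl; try discriminate.
    pose proof (Forall_inv Hf). pose proof (Forall_inv (Forall_inv_tail Hf)). simpl in Hs. subst x.
    exists w2. unfold lincomb; simpl. replace w1 with (1-w2) by lra.
    repeat split; try lra; ring.
  - intros [l [Hl [H1 [H2 H3]]]]. exists [1-l; l]. repeat split.
    + repeat (apply Forall_cons; [lra|]); apply Forall_nil.
    + simpl; lra.
    + apply pt_ext; unfold lincomb; simpl; [rewrite H1|rewrite H2|rewrite H3]; ring.
Qed.

Definition H3 (p1 p2 p3 x : pt) : Prop := exists w1 w2 w3,
  0 <= w1 /\ 0 <= w2 /\ 0 <= w3 /\ w1 + w2 + w3 = 1 /\
  px x = w1 * px p1 + w2 * px p2 + w3 * px p3 /\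
  py x = w1 * py p1 + w2 * py p2 + w3 * py p3 /\
  pz x = w1 * pz p1 + w2 * pz p2 + w3 * pz p3.

Lemma in_hull3_iff p1 p2 p3 x : in_hull [p1;p2;p3] x <-> H3 p1 p2 p3 x.
Proof.
  unfold in_hull, H3; split.
  - intros [w [Hl [Hf [Hs Hx]]]].
    destruct w as [|w1 [|w2 [|w3 [|w4 w]]]]; simpl in Hl; try discriminate.
    pose proof (Forall_inv Hf). pose proof (Forall_inv (Forall_inv_tail Hf)).
    pose proof (Forall_inv (Forall_inv_tail (Forall_inv_tail Hf))). simpl in Hs. subst x.
    exists w1, w2, w3. unfold lincomb; simpl. repeat split; try lra; try ring.
  - intros [w1 [w2 [w3 [? [? [? [? [? [? ?]]]]]]]]]. exists [w1;w2;w3]. repeat split.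
    + repeat (apply Forall_cons; [lra|]); apply Forall_nil.
    + simpl; lra.
    + apply pt_ext; unfold lincomb; simpl; [rewrite H4|rewrite H5|rewrite H6]; ring.
Qed.

Lemma in_hull_nil x : ~ in_hull [] x.
Proof.
  intros [w [Hl [_ [Hs _]]]]. destruct w; simpl in *; try discriminate. lra.
Qed.

Lemma H3_conv p1 p2 p3 y z l x : H3 p1 p2 p3 y -> H3 p1 p2 p3 z -> 0 <= l <= 1 ->
  px x = px y + l * (px z - px y) -> py x = py y + l * (py z - py y) ->
  pz x = pz y + l * (pz z - pz y) -> H3 p1 p2 p3 x.
Proof.
  intros [a1 [a2 [a3 [? [? [? [? [Ha1 [Ha2 Ha3]]]]]]]]]
         [b1 [b2 [b3 [? [? [? [? [Hb1 [Hb2 Hb3]]]]]]]]] Hl Hx Hy Hz.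
  exists ((1-l)*a1 + l*b1), ((1-l)*a2 + l*b2), ((1-l)*a3 + l*b3).
  repeat split; try nra.
Qed.

Lemma H3_v1 p1 p2 p3 : H3 p1 p2 p3 p1.
Proof. exists 1, 0, 0; repeat split; try lra; ring. Qed.
Lemma H3_v2 p1 p2 p3 : H3 p1 p2 p3 p2.
Proof. exists 0, 1, 0; repeat split; try lra; ring. Qed.
Lemma H3_v3 p1 p2 p3 : H3 p1 p2 p3 p3.
Proof. exists 0, 0, 1; repeat split; try lra; ring. Qed.

Lemma tri_has_In T v : tri_has T v = true <-> In v (tri_list T).
Proof.
  unfold tri_has. rewrite existsb_exists. split.
  - intros [y [Hy He]]. apply Nat.eqb_eq in He. subst; auto.
  - intros H. exists v. split; auto. apply Nat.eqb_refl.
Qed.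

Lemma tri_has3 a b c v : tri_has (a,b,c) v = true <-> v = a \/ v = b \/ v = c.
Proof.
  rewrite tri_has_In. simpl. intuition.
Qed.

Lemma H3_vert vert a b c v : tri_has (a,b,c) v = true ->
  H3 (vert a) (vert b) (vert c) (vert v).
Proof.
  rewrite tri_has3. intros [->|[->| ->]]; auto using H3_v1, H3_v2, H3_v3.
Qed.

Lemma seg_in_tri vert T u v x : tri_has T u = true -> tri_has T v = true ->
  in_seg (vert u) (vert v) x -> in_hull (map vert (tri_list T)) x.
Proof.
  destruct T as [[a b] c]. simpl. rewrite in_hull3_iff.
  intros Hu Hv Hs. apply in_seg_iff in Hs as [l [Hl [H1 [H2 H3']]]].
  apply (H3_conv _ _ _ (vert u) (vert v) l); auto using H3_vert.
Qed.


Open Scope R_scope.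

Definition closedR (X : R -> Prop) := forall x, ~ X x ->
  exists e, 0 < e /\ forall y, Rabs (y - x) < e -> ~ X y.

Lemma closed_ext X Y : (forall s, X s <-> Y s) -> closedR X -> closedR Y.
Proof.
  intros H HX x Hx. destruct (HX x) as [e [He Hy]].
  - rewrite H; auto.
  - exists e; split; auto. intros y Hyx. rewrite <- H. auto.
Qed.

Lemma closed_le a b c : closedR (fun s => a * s + b <= c).
Proof.
  intros x Hx. apply Rnot_le_lt in Hx.
  exists ((a*x+b - c) / (Rabs a + 1)). split.
  - apply Rdiv_lt_0_compat; [lra|]. pose proof (Rabs_pos a); lra.
  - intros y Hy Hc.
    assert (Hpos: 0 < Rabs a + 1) by (pose proof (Rabs_pos a); lra).
    assert (Rabs (y - x) * (Rabs a + 1) < a*x+b-c).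
    { apply (Rmult_lt_compat_r (Rabs a + 1)) in Hy; auto.
      unfold Rdiv in Hy. rewrite Rmult_assoc, Rinv_l in Hy; lra. }
    assert (Rabs (a * (y - x)) <= Rabs (y - x) * (Rabs a + 1)).
    { rewrite Rabs_mult. pose proof (Rabs_pos (y-x)). nra. }
    pose proof (Rle_abs (- (a * (y - x)))). rewrite Rabs_Ropp in H1. nra.
Qed.

Lemma closed_ge a b c : closedR (fun s => c <= a * s + b).
Proof.
  apply (closed_ext (fun s => (-a) * s + (-b) <= -c)).
  - intros s; split; intros; lra.
  - apply closed_le.
Qed.

Lemma closed_and X Y : closedR X -> closedR Y -> closedR (fun s => X s /\ Y s).
Proof.
  intros HX HY x Hx. destruct (classic (X x)) as [H|H].
  - destruct (HY x) as [e [He Hy]]; [tauto|]. exists e; split; auto.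
    intros y Hyx [_ ?]. eapply Hy; eauto.
  - destruct (HX x) as [e [He Hy]]; [tauto|]. exists e; split; auto.
    intros y Hyx [? _]. eapply Hy; eauto.
Qed.

Lemma closed_or X Y : closedR X -> closedR Y -> closedR (fun s => X s \/ Y s).
Proof.
  intros HX HY x Hx.
  destruct (HX x) as [e1 [He1 Hy1]]; [tauto|].
  destruct (HY x) as [e2 [He2 Hy2]]; [tauto|].
  exists (Rmin e1 e2). split. { apply Rmin_pos; auto. }
  intros y Hyx [H|H].
  - eapply Hy1; eauto. pose proof (Rmin_l e1 e2); lra.
  - eapply Hy2; eauto. pose proof (Rmin_r e1 e2); lra.
Qed.

Lemma closed_false : closedR (fun _ => False).
Proof. intros x _. exists 1. split; [lra|]. tauto. Qed.

Lemma closed_cand (Q : Prop) X : closedR X -> closedR (fun s => Q /\ X s).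
Proof.
  intros HX. destruct (classic Q) as [H|H].
  - apply (closed_ext X); [tauto|auto].
  - apply (closed_ext (fun _ => False)); [tauto|apply closed_false].
Qed.

Lemma closed_Exists {A} (Q : A -> R -> Prop) (l : list A) :
  (forall a, In a l -> closedR (Q a)) -> closedR (fun s => Exists (fun a => Q a s) l).
Proof.
  induction l as [|a l IH]; intros H.
  - apply (closed_ext (fun _ => False)); [|apply closed_false].
    intros s; split; [tauto|]. intros Hs; inversion Hs.
  - apply (closed_ext (fun s => Q a s \/ Exists (fun a => Q a s) l)).
    + intros s. rewrite Exists_cons. tauto.
    + apply closed_or; [apply H; simpl; auto|apply IH; intros; apply H; simpl; auto].
Qed.

Lemma interval_connected (A B : R -> Prop) : closedR A -> closedR B ->
  (forall s, 0 <= s <= 1 -> A s \/ B s) ->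
  (forall s, 0 <= s <= 1 -> A s -> B s -> False) ->
  A 0 -> forall s, 0 <= s <= 1 -> A s.
Proof.
  intros HA HB Hcov Hdis H0.
  set (S := fun s => 0 <= s <= 1 /\ forall y, 0 <= y <= s -> A y).
  assert (Hb : bound S). { exists 1. intros s [Hs _]. lra. }
  assert (Hne : exists x, S x).
  { exists 0. split; [lra|]. intros y Hy. replace y with 0 by lra. auto. }
  destruct (completeness S Hb Hne) as [m [Hub Hlub]].
  assert (Hm0 : 0 <= m). { apply Hub. destruct Hne. split; [lra|]. intros y Hy.
    replace y with 0 by lra. auto. }
  assert (Hm1 : m <= 1). { apply Hlub. intros s [Hs _]. lra. }
  assert (Hbelow : forall y, 0 <= y < m -> A y).
  { intros y Hy. destruct (classic (exists s, S s /\ y <= s)) as [[s [[_ Hs] Hys]]|Hn].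
    - apply Hs; lra.
    - exfalso. assert (m <= y); [|lra]. apply Hlub. intros s Hs.
      destruct (Rle_lt_dec s y); auto. exfalso; apply Hn; exists s; split; auto; lra. }
  assert (HAm : A m).
  { destruct (classic (A m)) as [?|Hn]; auto. exfalso.
    destruct (HA m Hn) as [e [He Hy]].
    destruct (Req_dec m 0) as [E|E]. { rewrite E in Hn; contradiction. }
    set (y := Rmax 0 (m - e/2)).
    apply (Hy y).
    - unfold y. unfold Rmax; destruct (Rle_dec 0 (m - e/2)); apply Rabs_def1; lra.
    - apply Hbelow. unfold y. unfold Rmax; destruct (Rle_dec 0 (m - e/2)); lra. }
  assert (Hall : forall y, 0 <= y <= m -> A y).
  { intros y Hy. destruct (Req_dec y m) as [->|]; auto. apply Hbelow; lra. }
  destruct (Req_dec m 1) as [E|E].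
  { intros s Hs. apply Hall. lra. }
  exfalso.
  assert (HnB : ~ B m) by (intros HBm; eapply Hdis; eauto; lra).
  destruct (HB m HnB) as [e [He Hy]].
  set (m' := Rmin 1 (m + e/2)).
  assert (Hm' : m < m' <= 1).
  { unfold m', Rmin; destruct (Rle_dec 1 (m + e/2)); lra. }
  assert (S m').
  { split; [lra|]. intros y Hy'. destruct (Rle_dec y m). { apply Hall; lra. }
    destruct (Hcov y) as [?|HBy]; [lra|auto|].
    exfalso. apply (Hy y); auto. apply Rabs_def1; unfold m', Rmin in *;
      destruct (Rle_dec 1 (m + e/2)); lra. }
  pose proof (Hub m' H). lra.
Qed.


Open Scope R_scope.

Definition linept (p q : pt) (s : R) : pt :=
  mkpt (px p + s * (px q - px p)) (py p + s * (py q - py p)) (pz p + s * (pz q - pz p)).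

Lemma closed_seg_pre a b p q : a <> b -> closedR (fun s => in_seg a b (linept p q s)).
Proof.
  intros Hab.
  set (dx := px b - px a). set (dy := py b - py a). set (dz := pz b - pz a).
  set (n := dx*dx + dy*dy + dz*dz).
  assert (Hn : n <> 0).
  { intros Hn. apply Hab. unfold n in Hn.
    assert (dx = 0) by nra. assert (dy = 0) by nra. assert (dz = 0) by nra.
    apply pt_ext; unfold dx, dy, dz in *; lra. }
  set (al := ((px q - px p)*dx + (py q - py p)*dy + (pz q - pz p)*dz) / n).
  set (be := ((px p - px a)*dx + (py p - py a)*dy + (pz p - pz a)*dz) / n).
  set (ax := px q - px p - al * dx). set (bx := px p - px a - be * dx).
  set (ay := py q - py p - al * dy). set (by' := py p - py a - be * dy).
  set (az := pz q - pz p - al * dz). set (bz := pz p - pz a - be * dz).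
  apply (closed_ext (fun s => (0 <= al * s + be /\ al * s + be <= 1) /\
     ((ax * s + bx <= 0 /\ 0 <= ax * s + bx) /\
      (ay * s + by' <= 0 /\ 0 <= ay * s + by') /\
      (az * s + bz <= 0 /\ 0 <= az * s + bz)))).
  2:{ repeat apply closed_and; auto using closed_le, closed_ge. }
  intros s. rewrite in_seg_iff. unfold linept; simpl.
  assert (Hlam : forall l, px p + s * (px q - px p) = px a + l * dx ->
     py p + s * (py q - py p) = py a + l * dy ->
     pz p + s * (pz q - pz p) = pz a + l * dz -> al * s + be = l).
  { intros l H1 H2 H3.
    assert (E: al*s+be = (((px q - px p)*s + (px p - px a))*dx +
       ((py q - py p)*s + (py p - py a))*dy + ((pz q - pz p)*s + (pz p - pz a))*dz)/n)
      by (unfold al, be; field; auto).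
    rewrite E.
    replace ((px q - px p)*s + (px p - px a)) with (l*dx) by lra.
    replace ((py q - py p)*s + (py p - py a)) with (l*dy) by lra.
    replace ((pz q - pz p)*s + (pz p - pz a)) with (l*dz) by lra.
    replace (l * dx * dx + l * dy * dy + l * dz * dz) with (l * n) by (unfold n; ring).
    field; auto. }
  split.
  - intros [[Hl1 Hl2] [[Hx1 Hx2] [[Hy1 Hy2] [Hz1 Hz2]]]].
    exists (al * s + be). repeat split; try lra.
    + unfold ax, bx in *. fold dx. nra.
    + unfold ay, by' in *. fold dy. nra.
    + unfold az, bz in *. fold dz. nra.
  - intros [l [Hl [H1 [H2 H3]]]].
    pose proof (Hlam l H1 H2 H3) as E.
    assert (Zx: ax*s + bx = 0).
    { unfold ax, bx. replace ((px q - px p - al * dx) * s + (px p - px a - be * dx))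
        with ((px p + s*(px q - px p)) - px a - dx*(al*s+be)) by ring.
      rewrite E, H1. unfold dx; ring. }
    assert (Zy: ay*s + by' = 0).
    { unfold ay, by'. replace ((py q - py p - al * dy) * s + (py p - py a - be * dy))
        with ((py p + s*(py q - py p)) - py a - dy*(al*s+be)) by ring.
      rewrite E, H2. unfold dy; ring. }
    assert (Zz: az*s + bz = 0).
    { unfold az, bz. replace ((pz q - pz p - al * dz) * s + (pz p - pz a - be * dz))
        with ((pz p + s*(pz q - pz p)) - pz a - dz*(al*s+be)) by ring.
      rewrite E, H3. unfold dz; ring. }
    rewrite Zx, Zy, Zz, E. repeat split; lra.
Qed.


Open Scope nat_scope.


Fixpoint chain (G : nat -> nat -> Prop) (x : nat) (l : list nat) (y : nat) : Prop :=
  match l with [] => x = y | z :: l' => G x z /\ chain G z l' y end.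

Lemma rt_chain (G : nat -> nat -> Prop) x y : clos_refl_trans _ G x y -> exists l, chain G x l y.
Proof.
  intros H. apply clos_rt_rt1n in H. induction H.
  - exists []. reflexivity.
  - destruct IHclos_refl_trans_1n as [l Hl]. exists (y :: l). simpl; auto.
Qed.

Lemma chain_suffix (G : nat -> nat -> Prop) l1 w l2 x y : chain G x (l1 ++ w :: l2) y -> chain G w l2 y.
Proof.
  revert x. induction l1 as [|a l1 IH]; simpl; intros x H.
  - tauto.
  - destruct H as [_ H]. eapply IH; eauto.
Qed.

Lemma chain_simple (G : nat -> nat -> Prop) x l y : chain G x l y -> exists l', chain G x l' y /\ NoDup (x :: l').
Proof.
  revert x. induction l as [|z l IH]; intros x H.
  - exists []. split; auto. constructor; auto. constructor.
  - destruct H as [Hxz H]. destruct (IH z H) as [l' [Hc Hnd]].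
    destruct (classic (x = z)) as [->|Hne].
    + exists l'; auto.
    + destruct (classic (In x l')) as [Hin|Hnin].
      * apply in_split in Hin as [l1 [l2 ->]].
        exists l2. split. { eapply chain_suffix; eauto. }
        apply NoDup_cons_iff in Hnd as [_ Hnd].
        apply NoDup_app_remove_l in Hnd. auto.
      * exists (z :: l'). split. { simpl; auto. }
        constructor; auto. simpl. intros [?|?]; auto.
Qed.

Lemma chain_nth (G : nat -> nat -> Prop) x l y : chain G x l y -> forall i, i < length l ->
  G (nth i (x :: l) 0) (nth i l 0).
Proof.
  revert x. induction l as [|z l IH]; intros x H i Hi; simpl in *. lia.
  destruct H as [Hxz H]. destruct i as [|i]; auto.
  apply (IH z H i). lia.
Qed.

Lemma chain_last (G : nat -> nat -> Prop) x l y : chain G x l y -> nth (length l) (x :: l) 0 = y.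
Proof.
  revert x. induction l as [|z l IH]; intros x H; simpl in *; auto.
  destruct H as [_ H]. apply (IH z H).
Qed.


Lemma graph_three_leaves (G : nat -> nat -> Prop)
  (Gsym : forall x y, G x y -> G y x)
  (Gdeg2 : forall x y1 y2 y3, G x y1 -> G x y2 -> G x y3 -> y1 = y2 \/ y1 = y3 \/ y2 = y3)
  x1 x2 x3 :
  x1 <> x2 -> x1 <> x3 -> x2 <> x3 ->
  (forall y z, G x1 y -> G x1 z -> y = z) ->
  (forall y z, G x2 y -> G x2 z -> y = z) ->
  (forall y z, G x3 y -> G x3 z -> y = z) ->
  clos_refl_trans _ G x1 x2 -> clos_refl_trans _ G x1 x3 -> False.
Proof.
  intros n12 n13 n23 D1 D2 D3 R12 R13.
  destruct (rt_chain _ _ _ R12) as [l0 Hl0].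
  destruct (chain_simple _ _ _ _ Hl0) as [l [Hc Hnd]]. clear l0 Hl0.
  set (p := x1 :: l).
  assert (Hlast : nth (length l) p 0 = x2) by (eapply chain_last; eauto).
  assert (Hlen : 1 <= length l).
  { destruct l; simpl in *; [congruence|lia]. }
  assert (Hstep : forall i, i < length l -> G (nth i p 0) (nth (S i) p 0)).
  { intros i Hi. apply (chain_nth _ _ _ _ Hc i Hi). }
  assert (Hback : forall i, 0 < i <= length l -> G (nth i p 0) (nth (i-1) p 0)).
  { intros i Hi. apply Gsym. assert (H := Hstep (i-1) ltac:(lia)).
    replace (S (i-1)) with i in H by lia. exact H. }
  assert (Hdiff : forall i j, i <= length l -> j <= length l -> i <> j ->
            nth i p 0 <> nth j p 0).
  { intros i j Hi Hj Hij E. apply Hij.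
    apply (proj1 (NoDup_nth p 0) Hnd); simpl; auto; lia. }
  assert (Hint : forall i, 0 < i < length l -> forall z, G (nth i p 0) z ->
            z = nth (i - 1) p 0 \/ z = nth (S i) p 0).
  { intros i Hi z Hz.
    assert (A1 : G (nth i p 0) (nth (i-1) p 0)).
    { apply Hback. lia. }
    assert (A2 := Hstep i ltac:(lia)).
    destruct (Gdeg2 _ _ _ _ Hz A1 A2) as [?|[?|E]]; auto.
    exfalso. apply (Hdiff (i-1) (S i)); auto; lia. }
  assert (Hclos : forall y z, In y p -> G y z -> In z p).
  { intros y z Hy Hz. apply (In_nth _ _ 0) in Hy as [i [Hi <-]].
    simpl in Hi.
    destruct (Nat.eq_dec i 0) as [->|Hi0].
    - assert (z = nth 1 p 0) as ->.
      { apply D1; auto; try (apply (Hstep 0); lia). }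
      apply nth_In. simpl; lia.
    - destruct (Nat.eq_dec i (length l)) as [->|Hil].
      + rewrite Hlast in Hz.
        assert (z = nth (length l - 1) p 0) as ->.
        { apply D2; auto. rewrite <- Hlast. apply Hback. lia. }
        apply nth_In. simpl; lia.
      + destruct (Hint i ltac:(lia) z Hz) as [->| ->]; apply nth_In; simpl; lia. }
  assert (Hin3 : In x3 p).
  { assert (Hgen : forall a b, clos_refl_trans_1n _ G a b -> In a p -> In b p).
    { intros a b Hab; induction Hab; auto. intros; apply IHHab; eapply Hclos; eauto. }
    apply Hgen with x1. apply clos_rt_rt1n; auto. simpl; auto. }
  apply (In_nth _ _ 0) in Hin3 as [i [Hi E3]]. simpl in Hi.
  assert (i <> 0) by (intros ->; simpl in E3; congruence).
  assert (i <> length l) by (intros ->; congruence).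
  assert (A1 : G x3 (nth (i-1) p 0)).
  { rewrite <- E3. apply Hback. lia. }
  assert (A2 : G x3 (nth (S i) p 0)) by (rewrite <- E3; apply Hstep; lia).
  apply (Hdiff (i-1) (S i)); try lia. apply D3; auto.
Qed.


Open Scope R_scope.

Lemma noncol_distinct p q r : noncollinear p q r -> p <> q /\ q <> r /\ p <> r.
Proof.
  unfold noncollinear. intros H. repeat split; intros E; subst; apply H;
  apply pt_ext; unfold cross, psub, padd, pscale, origin; simpl; ring.
Qed.

Lemma tri3_cover a b c v x y : v <> x -> v <> y -> x <> y ->
  tri_has (a,b,c) v = true -> tri_has (a,b,c) x = true -> tri_has (a,b,c) y = true ->
  forall u, tri_has (a,b,c) u = true -> u = v \/ u = x \/ u = y.
Proof.
  intros n1 n2 n3 Hv Hx Hy u Hu. rewrite tri_has3 in Hv, Hx, Hy, Hu.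
  destruct Hv as [?|[?|?]], Hx as [?|[?|?]], Hy as [?|[?|?]],
    Hu as [?|[?|?]]; subst; try congruence; tauto.
Qed.

Lemma filter_singleton {A} (f : A -> bool) l x y : length (filter f l) = 1%nat ->
  In x l -> f x = true -> In y l -> f y = true -> x = y.
Proof.
  intros Hl Hx Hfx Hy Hfy.
  assert (Ix : In x (filter f l)) by (apply filter_In; auto).
  assert (Iy : In y (filter f l)) by (apply filter_In; auto).
  destruct (filter f l) as [|u [|w r]]; simpl in *; try lia.
  destruct Ix as [<-|[]], Iy as [<-|[]]; auto.
Qed.

Lemma NoDup_length_eq {A} (l1 l2 : list A) : NoDup l1 -> NoDup l2 ->
  incl l1 l2 -> incl l2 l1 -> length l1 = length l2.
Proof.
  intros. apply Nat.le_antisymm; apply NoDup_incl_length; auto.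
Qed.

Definition list_sumn (l : list nat) := fold_right Nat.add 0%nat l.

Lemma sum_map_add {A} (f g : A -> nat) l :
  list_sumn (map (fun a => (f a + g a)%nat) l) = (list_sumn (map f l) + list_sumn (map g l))%nat.
Proof. induction l; simpl; lia. Qed.

Lemma length_filter_sum {A} (f : A -> bool) l :
  length (filter f l) = list_sumn (map (fun a => if f a then 1%nat else 0%nat) l).
Proof. induction l; simpl; auto. destruct (f a); simpl; lia. Qed.

Lemma double_count {A B} (f : A -> B -> bool) l1 l2 :
  list_sumn (map (fun a => length (filter (f a) l2)) l1) =
  list_sumn (map (fun b => length (filter (fun a => f a b) l1)) l2).
Proof.
  induction l1 as [|a l1 IH]; simpl.
  - induction l2; simpl; auto.
  - rewrite IH. 
    transitivity (list_sumn (map (fun b => ((if f a b then 1 else 0) +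
                    length (filter (fun a0 => f a0 b) l1))%nat) l2)).
    + rewrite sum_map_add, length_filter_sum. reflexivity.
    + f_equal. apply map_ext. intros b. destruct (f a b); reflexivity.
Qed.

Lemma sum_le_const {A} (f : A -> nat) l k : (forall a, In a l -> (f a <= k)%nat) ->
  (list_sumn (map f l) <= k * length l)%nat.
Proof.
  induction l as [|x l IH]; simpl; intros H; [lia|].
  specialize (IH (fun a H' => H a (or_intror H'))).
  specialize (H x (or_introl eq_refl)). lia.
Qed.

Lemma sum_eq_const {A} (f : A -> nat) l k : (forall a, In a l -> f a = k) ->
  list_sumn (map f l) = (k * length l)%nat.
Proof.
  induction l as [|x l IH]; simpl; intros H; [lia|]. rewrite IH by auto. rewrite H by auto. lia.
Qed.

Lemma edge_count_sym tris a b : edge_count tris a b = edge_count tris b a.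
Proof.
  unfold edge_count. f_equal. apply filter_ext. intros; apply andb_comm.
Qed.

Lemma edge_count_In tris T a b : In T tris -> tri_has T a = true -> tri_has T b = true ->
  (0 < edge_count tris a b)%nat.
Proof.
  intros. unfold edge_count.
  assert (In T (filter (fun T => tri_has T a && tri_has T b) tris))
    by (apply filter_In; rewrite H0, H1; auto).
  destruct (filter _ _); simpl in *; [tauto|lia].
Qed.

Lemma edge_count_pos tris a b : (0 < edge_count tris a b)%nat ->
  exists T, In T tris /\ tri_has T a = true /\ tri_has T b = true.
Proof.
  unfold edge_count. intros H.
  destruct (filter _ tris) as [|T r] eqn:E; simpl in H; [lia|].
  assert (In T (filter (fun T => tri_has T a && tri_has T b) tris)) by (rewrite E; simpl; auto).
  apply filter_In in H0 as [H1 H2]. apply andb_true_iff in H2. exists T; tauto.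
Qed.


Open Scope R_scope.

Lemma tri_wf nv vert tris : is_tri_surface nv vert tris -> forall a b c, In (a,b,c) tris ->
  (a < nv /\ b < nv /\ c < nv /\ a <> b /\ b <> c /\ a <> c)%nat.
Proof.
  intros HS a b c H. destruct HS as [HW _]. destruct (HW a b c H) as [? [? [? Hn]]].
  apply noncol_distinct in Hn as [? [? ?]].
  repeat split; auto; intros ->; auto.
Qed.

Lemma link_sym tris v x y : link_adj tris v x y -> link_adj tris v y x.
Proof.
  intros [T [? [? [? [? [? [? ?]]]]]]]. exists T; repeat split; auto.
Qed.

Lemma link_deg2 nv vert tris : is_tri_surface nv vert tris -> forall v x y1 y2 y3,
  link_adj tris v x y1 -> link_adj tris v x y2 -> link_adj tris v x y3 ->
  y1 = y2 \/ y1 = y3 \/ y2 = y3.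
Proof.
  intros HS v x y1 y2 y3 [T1 [I1 [V1 [X1 [Y1 [nx1 [ny1 nxy1]]]]]]]
    [T2 [I2 [V2 [X2 [Y2 [nx2 [ny2 nxy2]]]]]]] [T3 [I3 [V3 [X3 [Y3 [nx3 [ny3 nxy3]]]]]]].
  destruct (classic (y1 = y2)); auto. destruct (classic (y1 = y3)); auto.
  destruct (classic (y2 = y3)); auto. exfalso.
  assert (Hcov : forall T y, tri_has T v = true -> tri_has T x = true -> tri_has T y = true ->
     y <> v -> x <> y -> forall u, tri_has T u = true -> u = v \/ u = x \/ u = y).
  { intros [[a b] c] y Hv Hx Hy nyv nxy u Hu. apply (tri3_cover a b c v x y); auto. }
  assert (T1 <> T2).
  { intros ->. destruct (Hcov T2 y1 V2 X2 Y1 ny1 nxy1 y2 Y2) as [?|[?|?]]; auto. }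
  assert (T1 <> T3).
  { intros ->. destruct (Hcov T3 y1 V3 X3 Y1 ny1 nxy1 y3 Y3) as [?|[?|?]]; auto. }
  assert (T2 <> T3).
  { intros ->. destruct (Hcov T3 y2 V3 X3 Y2 ny2 nxy2 y3 Y3) as [?|[?|?]]; auto. }
  assert (Hle : (3 <= edge_count tris v x)%nat).
  { unfold edge_count. change 3%nat with (length [T1;T2;T3]).
    apply NoDup_incl_length.
    - repeat constructor; simpl; intuition.
    - intros T HT. simpl in HT. apply filter_In.
      destruct HT as [<-|[<-|[<-|[]]]]; rewrite ?V1, ?X1, ?V2, ?X2, ?V3, ?X3; auto. }
  destruct HS as [_ [_ [_ [_ [_ [HE _]]]]]].
  specialize (HE v x ltac:(auto)). lia.
Qed.

Lemma link_deg1 tris v x : edge_count tris v x = 1%nat -> forall y z,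
  link_adj tris v x y -> link_adj tris v x z -> y = z.
Proof.
  intros Hc y z [T1 [I1 [V1 [X1 [Y1 [nx1 [ny1 nxy1]]]]]]]
    [T2 [I2 [V2 [X2 [Y2 [nx2 [ny2 nxy2]]]]]]].
  assert (T1 = T2).
  { apply (filter_singleton (fun T => tri_has T v && tri_has T x) tris); auto;
    apply andb_true_iff; auto. }
  subst T2. destruct T1 as [[a b] c].
  destruct (tri3_cover a b c v x y ltac:(auto) ltac:(auto) nxy1 V1 X1 Y1 z Y2) as [?|[?|?]]; auto;
  congruence.
Qed.

Lemma no_three_boundary nv vert tris : is_tri_surface nv vert tris ->
  forall v x1 x2 x3, (v < nv)%nat -> x1 <> x2 -> x1 <> x3 -> x2 <> x3 ->
  v <> x1 -> v <> x2 -> v <> x3 ->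
  edge_count tris v x1 = 1%nat -> edge_count tris v x2 = 1%nat ->
  edge_count tris v x3 = 1%nat -> False.
Proof.
  intros HS v x1 x2 x3 Hv n12 n13 n23 nv1 nv2 nv3 E1 E2 E3.
  pose proof HS as HS'.
  destruct HS' as [_ [_ [_ [_ [_ [_ HL]]]]]].
  apply (graph_three_leaves (link_adj tris v) (link_sym tris v)
           (link_deg2 nv vert tris HS v) x1 x2 x3).
  all: try assumption.
  all: try (apply link_deg1; assumption).
  all: apply HL; auto; lia.
Qed.


Open Scope nat_scope.

Definition ES tris := nodup pair_eq_dec (flat_map unord_edges tris).
Definition cnt tris (e : nat * nat) := edge_count tris (fst e) (snd e).

Lemma minmax x y : (Nat.min x y = x /\ Nat.max x y = y) \/ (Nat.min x y = y /\ Nat.max x y = x).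
Proof. lia. Qed.

Lemma unord_prop a b c e : a <> b -> b <> c -> a <> c -> In e (unord_edges (a,b,c)) ->
  fst e < snd e /\ tri_has (a,b,c) (fst e) = true /\ tri_has (a,b,c) (snd e) = true.
Proof.
  intros n1 n2 n3 H. rewrite !tri_has3.
  simpl in H; destruct H as [<-|[<-|[<-|[]]]]; simpl; (split; [lia|]);
  match goal with |- context [Nat.min ?x ?y] => destruct (minmax x y) as [[-> ->]|[-> ->]] end;
  repeat split; tauto.
Qed.

Lemma ES_prop nv vert tris : is_tri_surface nv vert tris -> forall e, In e (ES tris) ->
  (fst e < snd e /\ snd e < nv /\ 1 <= cnt tris e <= 2)%nat.
Proof.
  intros HS e He. unfold ES in He. apply nodup_In, in_flat_map in He as [[[a b] c] [HT He]].
  destruct (tri_wf _ _ _ HS a b c HT) as [? [? [? [? [? ?]]]]].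
  destruct (unord_prop a b c e) as [Hlt [Ha1 Ha2]]; auto.
  repeat split; auto.
  - rewrite tri_has3 in Ha2. lia.
  - unfold cnt. pose proof (edge_count_In tris _ _ _ HT Ha1 Ha2). lia.
  - destruct HS as [_ [_ [_ [_ [_ [HE _]]]]]]. apply HE. lia.
Qed.

Lemma tri_edges3 nv vert tris : is_tri_surface nv vert tris -> forall T, In T tris ->
  length (filter (fun e => tri_has T (fst e) && tri_has T (snd e)) (ES tris)) = 3%nat.
Proof.
  intros HS [[a b] c] HT.
  destruct (tri_wf _ _ _ HS a b c HT) as [? [? [? [? [? ?]]]]].
  change 3%nat with (length (unord_edges (a,b,c))).
  apply NoDup_length_eq.
  - apply NoDup_filter, NoDup_nodup.
  - simpl. repeat constructor; simpl; intros Hc; repeat destruct Hc as [Hc|Hc];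
    try injection Hc; try lia; auto.
  - intros [m M] Hin. apply filter_In in Hin as [Hin Hh].
    apply andb_true_iff in Hh as [Hm HM]. simpl in Hm, HM.
    destruct (ES_prop _ _ _ HS _ Hin) as [Hlt _]. simpl in Hlt.
    rewrite tri_has3 in Hm, HM. simpl.
    destruct Hm as [->|[->| ->]], HM as [->|[->| ->]]; try lia;
    first [left; apply pair_equal_spec; split; lia
          | right; left; apply pair_equal_spec; split; lia
          | right; right; left; apply pair_equal_spec; split; lia].
  - intros e He. apply filter_In. split.
    + unfold ES. apply nodup_In, in_flat_map. exists (a,b,c); auto.
    + destruct (unord_prop a b c e) as [_ [Hb1 Hb2]]; auto. rewrite Hb1, Hb2; auto.
Qed.

Lemma sum_cnt nv vert tris : is_tri_surface nv vert tris ->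
  list_sumn (map (cnt tris) (ES tris)) = (3 * length tris)%nat.
Proof.
  intros HS. unfold cnt, edge_count.
  rewrite (double_count (fun e T => tri_has T (fst e) && tri_has T (snd e))).
  apply sum_eq_const. intros T HT. eapply tri_edges3; eauto.
Qed.

Lemma sum_split {A} (c : A -> nat) l : (forall e, In e l -> 1 <= c e <= 2)%nat ->
  (list_sumn (map c l) + length (filter (fun e => c e =? 1)%nat l) = 2 * length l)%nat.
Proof.
  induction l as [|e l IH]; simpl; intros H; auto.
  specialize (IH (fun e' H' => H e' (or_intror H'))).
  specialize (H e (or_introl eq_refl)).
  destruct (Nat.eqb_spec (c e) 1); simpl; lia.
Qed.

Definition incv (v : nat) (e : nat * nat) := ((v =? fst e) || (v =? snd e))%nat.

Lemma two_in_seq m M nv : (m < M)%nat -> (M < nv)%nat ->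
  length (filter (fun v => incv v (m, M)) (seq 0 nv)) = 2%nat.
Proof.
  intros. change 2%nat with (length [m; M]). apply NoDup_length_eq.
  - apply NoDup_filter, seq_NoDup.
  - constructor. { simpl. intros [|[]]; lia. } constructor. { simpl; tauto. } constructor.
  - intros v Hv. apply filter_In in Hv as [_ Hv]. unfold incv in Hv. simpl in Hv.
    apply orb_true_iff in Hv as [Hv|Hv]; apply Nat.eqb_eq in Hv; subst; simpl; auto.
  - intros v Hv. apply filter_In. simpl in Hv. unfold incv; simpl.
    destruct Hv as [<-|[<-|[]]]; split; try (apply in_seq; lia);
    rewrite Nat.eqb_refl; auto using orb_true_r.
Qed.

Definition other (v : nat) (e : nat * nat) := if (v =? fst e)%nat then snd e else fst e.

Lemma edge_at_v tris v e : (fst e < snd e)%nat -> incv v e = true ->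
  other v e <> v /\ e = (Nat.min v (other v e), Nat.max v (other v e)) /\
  cnt tris e = edge_count tris v (other v e).
Proof.
  destruct e as [m M]; unfold incv, other, cnt; simpl. intros Hlt Hi.
  destruct (Nat.eqb_spec v m).
  - subst. repeat split; try lia. f_equal; lia.
  - simpl in Hi. apply Nat.eqb_eq in Hi. subst. repeat split; try lia.
    + f_equal; lia.
    + apply edge_count_sym.
Qed.

Definition Bd tris := filter (fun e => cnt tris e =? 1)%nat (ES tris).

Lemma vertex_le2 nv vert tris : is_tri_surface nv vert tris -> forall v, (v < nv)%nat ->
  (length (filter (fun e => incv v e) (Bd tris)) <= 2)%nat.
Proof.
  intros HS v Hv.
  assert (Hnd : NoDup (filter (fun e => incv v e) (Bd tris))).
  { apply NoDup_filter, NoDup_filter, NoDup_nodup. }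
  assert (Hp : forall e, In e (filter (fun e => incv v e) (Bd tris)) ->
     incv v e = true /\ (fst e < snd e)%nat /\ cnt tris e = 1%nat).
  { intros e He. apply filter_In in He as [He Hi]. unfold Bd in He.
    apply filter_In in He as [He Hc]. apply Nat.eqb_eq in Hc.
    destruct (ES_prop _ _ _ HS e He). auto. }
  destruct (filter (fun e => incv v e) (Bd tris)) as [|e1 [|e2 [|e3 r]]] eqn:EL;
    simpl; try lia. exfalso.
  destruct (Hp e1 ltac:(simpl; auto)) as [i1 [l1 c1]].
  destruct (Hp e2 ltac:(simpl; auto)) as [i2 [l2 c2]].
  destruct (Hp e3 ltac:(simpl; auto)) as [i3 [l3 c3]].
  destruct (edge_at_v tris v e1 l1 i1) as [o1 [q1 k1]].
  destruct (edge_at_v tris v e2 l2 i2) as [o2 [q2 k2]].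
  destruct (edge_at_v tris v e3 l3 i3) as [o3 [q3 k3]].
  apply NoDup_cons_iff in Hnd as [n1 Hnd]. apply NoDup_cons_iff in Hnd as [n2 _].
  simpl in n1, n2.
  apply (no_three_boundary nv vert tris HS v (other v e1) (other v e2) (other v e3) Hv).
  - intros E. apply n1. left. rewrite q1, q2, E. auto.
  - intros E. apply n1. right. left. rewrite q1, q3, E. auto.
  - intros E. apply n2. left. rewrite q2, q3, E. auto.
  - auto.
  - auto.
  - auto.
  - congruence.
  - congruence.
  - congruence.
Qed.

Lemma Bd_le nv vert tris : is_tri_surface nv vert tris -> (length (Bd tris) <= nv)%nat.
Proof.
  intros HS.
  pose proof (double_count (fun e v => incv v e) (Bd tris) (seq 0 nv)) as D.
  rewrite (sum_eq_const _ _ 2%nat) in D.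
  2:{ intros [m M] He. unfold Bd in He. apply filter_In in He as [He _].
      destruct (ES_prop _ _ _ HS _ He) as [? [? _]]. simpl in *. apply two_in_seq; auto. }
  assert (list_sumn (map (fun v => length (filter (fun e => incv v e) (Bd tris))) (seq 0 nv))
          <= 2 * length (seq 0 nv))%nat.
  { apply sum_le_const. intros v Hv. apply in_seq in Hv. apply (vertex_le2 nv vert); auto; lia. }
  rewrite length_seq in H. lia.
Qed.

Theorem counting_bound nv vert tris : is_tri_surface nv vert tris -> tris <> [] ->
  (4 * genus1 nv tris + 1 <= Z.of_nat (length tris))%Z.
Proof.
  intros HS Hne.
  assert (Hnv : (3 <= nv)%nat).
  { destruct tris as [|[[a b] c] r]; [congruence|].
    destruct (tri_wf _ _ _ HS a b c ltac:(simpl; auto)) as [? [? [? [? [? ?]]]]]. lia. }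
  pose proof (sum_cnt _ _ _ HS) as S1.
  pose proof (sum_split (cnt tris) (ES tris)
    (fun e He => proj2 (proj2 (ES_prop _ _ _ HS e He)))) as S2.
  pose proof (Bd_le _ _ _ HS) as S3. unfold Bd in S3.
  unfold genus1, euler_char, num_edges. fold (ES tris).
  set (E := length (ES tris)) in *. set (b := length (filter _ (ES tris))) in *.
  set (t := length tris) in *.
  set (X := (1 - (Z.of_nat nv - Z.of_nat E + Z.of_nat t))%Z).
  pose proof (Z.div_mod X 2 ltac:(lia)). pose proof (Z.mod_pos_bound X 2 ltac:(lia)).
  lia.
Qed.


Open Scope nat_scope.

Definition pw {A} (R : A -> A -> Prop) (d : A) (l : list A) :=
  forall i j, i < length l -> j < length l -> i <> j -> R (nth i l d) (nth j l d).

Lemma pw_FOP {A} (R : A -> A -> Prop) d l : pw R d l -> ForallOrdPairs R l.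
Proof.
  induction l as [|a l IH]; intros H; constructor.
  - apply Forall_forall. intros x Hx. apply (In_nth _ _ d) in Hx as [j [Hj <-]].
    apply (H 0 (S j)); simpl; lia.
  - apply IH. intros i j Hi Hj Hij. apply (H (S i) (S j)); simpl; lia.
Qed.

Lemma FOP_pw {A} (R : A -> A -> Prop) d l : (forall x y, R x y -> R y x) ->
  ForallOrdPairs R l -> pw R d l.
Proof.
  intros Hs H. induction H as [|a l Hf H IH]; intros i j Hi Hj Hij; simpl in *; [lia|].
  rewrite Forall_forall in Hf.
  destruct i as [|i], j as [|j]; try lia.
  - apply Hf, nth_In; lia.
  - apply Hs, Hf, nth_In; lia.
  - apply IH; lia.
Qed.

Lemma FOP_filter {A} (R : A -> A -> Prop) f l : ForallOrdPairs R l ->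
  ForallOrdPairs R (filter f l).
Proof.
  intros H. induction H as [|a l Hf H IH]; simpl; [constructor|].
  destruct (f a); auto. constructor; auto.
  rewrite Forall_forall in *. intros x Hx. apply filter_In in Hx. apply Hf; tauto.
Qed.

Lemma FOP_map {A B} (R : A -> A -> Prop) (R' : B -> B -> Prop) (h : A -> B) l :
  ForallOrdPairs R l -> (forall x y, In x l -> In y l -> R x y -> R' (h x) (h y)) ->
  ForallOrdPairs R' (map h l).
Proof.
  intros H. induction H as [|a l Hf H IH]; simpl; intros Hi; [constructor|].
  constructor.
  - rewrite Forall_forall in *. intros x Hx. apply in_map_iff in Hx as [y [<- Hy]].
    apply Hi; simpl; auto.
  - apply IH. intros; apply Hi; simpl; auto.
Qed.

Lemma length_filter_map {A B} (f : B -> bool) (g : A -> B) l :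
  length (filter f (map g l)) = length (filter (fun a => f (g a)) l).
Proof. rewrite filter_map_swap, length_map. reflexivity. Qed.

Lemma filter_filter_same {A} (f g : A -> bool) l :
  (forall x, In x l -> f x = true -> g x = true) -> filter f (filter g l) = filter f l.
Proof.
  induction l as [|a l IH]; simpl; intros H; auto.
  destruct (g a) eqn:Eg; simpl.
  - destruct (f a); rewrite IH; auto.
  - destruct (f a) eqn:Ef.
    + rewrite H in Eg; auto; discriminate.
    + apply IH; auto.
Qed.

Lemma length_filter_filter_le {A} (f g : A -> bool) l :
  length (filter f (filter g l)) <= length (filter f l).
Proof.
  induction l as [|a l IH]; simpl; auto.
  destruct (g a); simpl; destruct (f a); simpl; lia.
Qed.

Lemma rt_map {A B} (R : A -> A -> Prop) (R' : B -> B -> Prop) (h : A -> B) (Inv : A -> Prop) :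
  (forall a b, Inv a -> R a b -> Inv b /\ R' (h a) (h b)) ->
  forall x y, clos_refl_trans _ R x y -> Inv x -> clos_refl_trans _ R' (h x) (h y).
Proof.
  intros H x y Hr. apply clos_rt_rt1n in Hr. induction Hr; intros Hx.
  - apply rt_refl.
  - destruct (H _ _ Hx H0). eapply rt_trans; [apply rt_step; eauto|]. auto.
Qed.

Lemma rt_sym {A} (R : A -> A -> Prop) : (forall a b, R a b -> R b a) ->
  forall x y, clos_refl_trans _ R x y -> clos_refl_trans _ R y x.
Proof.
  intros Hs x y H. induction H.
  - apply rt_step; auto.
  - apply rt_refl.
  - eapply rt_trans; eauto.
Qed.

Lemma map_fst_filter {A B} (g : A -> bool) (l : list (A * B)) :
  map fst (filter (fun p => g (fst p)) l) = filter g (map fst l).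
Proof. induction l as [|[a b] l IH]; simpl; auto. destruct (g a); simpl; rewrite IH; auto. Qed.

Lemma map_fst_combine {A B} (l : list A) (l' : list B) : length l = length l' ->
  map fst (combine l l') = l.
Proof.
  revert l'. induction l as [|a l IH]; intros [|b l'] H; simpl in *; try lia; auto.
  rewrite IH; auto.
Qed.


Open Scope nat_scope.

Definition adjS (tris : list (nat*nat*nat)) x y :=
  exists T, In T tris /\ tri_has T x = true /\ tri_has T y = true.
Definition compS tris a0 u := clos_refl_trans _ (adjS tris) a0 u.
Definition compb tris a0 u : bool :=
  if excluded_middle_informative (compS tris a0 u) then true else false.
Definition inC tris a0 (T : nat*nat*nat) := compb tris a0 (fst (fst T)).
Definition tris0 tris a0 := filter (inC tris a0) tris.

Lemma compb_iff tris a0 u : compb tris a0 u = true <-> compS tris a0 u.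
Proof.
  unfold compb. destruct (excluded_middle_informative _); split; auto; discriminate.
Qed.

Lemma comp_tri tris a0 T u w : compS tris a0 u -> In T tris -> tri_has T u = true ->
  tri_has T w = true -> compS tris a0 w.
Proof.
  intros Hc HT Hu Hw. eapply rt_trans; [exact Hc|]. apply rt_step. exists T; auto.
Qed.

Lemma tri_has_first (T : nat*nat*nat) : tri_has T (fst (fst T)) = true.
Proof. destruct T as [[a b] c]. apply tri_has3. simpl; auto. Qed.

Lemma tris0_in tris a0 T : In T (tris0 tris a0) <-> In T tris /\ compS tris a0 (fst (fst T)).
Proof. unfold tris0, inC. rewrite filter_In, compb_iff. tauto. Qed.

Lemma tris0_all tris a0 T w : In T (tris0 tris a0) -> tri_has T w = true -> compS tris a0 w.
Proof.
  rewrite tris0_in. intros [HT Hc] Hw. eapply comp_tri; eauto using tri_has_first.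
Qed.

Lemma tris0_of tris a0 T u : In T tris -> tri_has T u = true -> compS tris a0 u ->
  In T (tris0 tris a0).
Proof.
  intros HT Hu Hc. apply tris0_in. split; auto. eapply comp_tri; eauto using tri_has_first.
Qed.

Lemma ec0 tris a0 a b : compS tris a0 a -> edge_count (tris0 tris a0) a b = edge_count tris a b.
Proof.
  intros Hc. unfold edge_count, tris0. rewrite filter_filter_same; auto.
  intros T HT Hf. apply andb_true_iff in Hf as [Ha _]. unfold inC. apply compb_iff.
  eapply comp_tri; eauto using tri_has_first.
Qed.

Lemma ec0_le tris a0 a b : edge_count (tris0 tris a0) a b <= edge_count tris a b.
Proof. unfold edge_count, tris0. apply length_filter_filter_le. Qed.

Definition BdQ (vert : nat -> pt) tris (Q : nat -> nat -> Prop) (x : pt) :=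
  exists a b, Q a b /\ a <> b /\ edge_count tris a b = 1 /\ in_seg (vert a) (vert b) x.

Lemma ec1_lt nv vert tris : is_tri_surface nv vert tris -> forall a b,
  edge_count tris a b = 1 -> a < nv /\ b < nv.
Proof.
  intros HS a b H. destruct (edge_count_pos tris a b) as [[[x y] z] [HT [Ha Hb]]]; [lia|].
  destruct (tri_wf _ _ _ HS x y z HT) as [? [? [? _]]].
  rewrite tri_has3 in Ha, Hb. lia.
Qed.

Lemma closed_bd nv vert tris Q p q : is_tri_surface nv vert tris ->
  closedR (fun s => BdQ vert tris Q (linept p q s)).
Proof.
  intros HS.
  apply (closed_ext (fun s => Exists (fun e => (Q (fst e) (snd e) /\ fst e <> snd e /\
      edge_count tris (fst e) (snd e) = 1) /\ in_seg (vert (fst e)) (vert (snd e)) (linept p q s))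
      (list_prod (seq 0 nv) (seq 0 nv)))).
  - intros s. rewrite Exists_exists. unfold BdQ. split.
    + intros [[a b] [_ [[? [? ?]] ?]]]. exists a, b; auto.
    + intros [a [b [? [? [? ?]]]]]. exists (a,b). simpl.
      destruct (ec1_lt _ _ _ HS a b) as [? ?]; auto.
      split; [apply in_prod_iff; split; apply in_seq; lia|]. auto.
  - apply closed_Exists. intros [a b] Hab. simpl.
    destruct (classic (Q a b /\ a <> b /\ edge_count tris a b = 1)) as [Hq|Hq].
    + apply (closed_ext (fun s => in_seg (vert a) (vert b) (linept p q s))); [tauto|].
      apply closed_seg_pre. intros E. destruct HS as [_ [Hinj _]].
      apply in_prod_iff in Hab as [Ha Hb]. apply in_seq in Ha, Hb.
      apply Hinj in E; try lia; tauto.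
    + apply (closed_ext (fun _ => False)); [tauto|apply closed_false].
Qed.

Lemma bd_disjoint nv vert tris a0 x : is_tri_surface nv vert tris ->
  BdQ vert tris (fun a _ => compS tris a0 a) x ->
  BdQ vert tris (fun a _ => ~ compS tris a0 a) x -> False.
Proof.
  intros HS [a1 [b1 [C1 [n1 [E1 S1]]]]] [a2 [b2 [C2 [n2 [E2 S2]]]]].
  destruct (edge_count_pos tris a1 b1) as [T1 [I1 [A1 B1]]]; [lia|].
  destruct (edge_count_pos tris a2 b2) as [T2 [I2 [A2 B2]]]; [lia|].
  pose proof (seg_in_tri vert T1 a1 b1 x A1 B1 S1) as H1.
  pose proof (seg_in_tri vert T2 a2 b2 x A2 B2 S2) as H2.
  destruct HS as [_ [_ [_ [_ [Hemb _]]]]].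
  assert (H3 := proj1 (Hemb T1 T2 I1 I2 x) (conj H1 H2)). clear H1.
  rename H3 into H1.
  destruct (common_verts T1 T2) as [|u r] eqn:Ec.
  - simpl in H1. eapply in_hull_nil; eauto.
  - assert (In u (common_verts T1 T2)) by (rewrite Ec; simpl; auto).
    unfold common_verts in H. apply filter_In in H as [Hu1 Hu2].
    apply tri_has_In in Hu1.
    apply C2. eapply comp_tri; [|exact I2|exact Hu2|exact A2].
    eapply comp_tri; [exact C1|exact I1|exact A1|exact Hu1].
Qed.


Open Scope R_scope.

Lemma pvert_mod P i : (0 < length P)%nat ->
  pvert P (i mod length P) = pvert P i /\ pvert P (S (i mod length P)) = pvert P (S i).
Proof.
  intros H. unfold pvert. split.
  - rewrite Nat.mod_mod; auto; lia.
  - f_equal. replace (S (i mod length P)) with (i mod length P + 1)%nat by lia.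
    replace (S i) with (i + 1)%nat by lia.
    rewrite Nat.add_mod_idemp_l; auto; lia.
Qed.

Lemma linept0 p q : linept p q 0 = p.
Proof. apply pt_ext; unfold linept; simpl; ring. Qed.
Lemma linept1 p q : linept p q 1 = q.
Proof. apply pt_ext; unfold linept; simpl; ring. Qed.

Lemma linept_seg p q s : 0 <= s <= 1 -> in_seg p q (linept p q s).
Proof. intros. apply in_seg_iff. exists s. unfold linept; simpl. repeat split; lra. Qed.


Lemma propagate nv vert tris a0 P : is_tri_surface nv vert tris ->
  (forall x, surface_boundary vert tris x <-> polygon_set P x) ->
  (0 < length P)%nat ->
  BdQ vert tris (fun a _ => compS tris a0 a) (pvert P 0) ->
  forall x, polygon_set P x -> BdQ vert tris (fun a _ => compS tris a0 a) x.
Proof.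
  intros HS HB HP H0.
  set (A := BdQ vert tris (fun a _ => compS tris a0 a)).
  set (B := BdQ vert tris (fun a _ => ~ compS tris a0 a)).
  assert (Hsplit : forall x, polygon_set P x -> A x \/ B x).
  { intros x Hx. apply HB in Hx as [a [b [n [E S]]]].
    destruct (classic (compS tris a0 a)); [left|right]; exists a, b; auto. }
  assert (Hedge : forall i, A (pvert P i) -> forall s, 0 <= s <= 1 ->
            A (linept (pvert P i) (pvert P (S i)) s)).
  { intros i Hi.
    apply (interval_connected (fun s => A (linept (pvert P i) (pvert P (S i)) s))
                              (fun s => B (linept (pvert P i) (pvert P (S i)) s))).
    - apply (closed_bd nv); auto.
    - apply (closed_bd nv); auto.
    - intros s Hs. apply Hsplit. exists (i mod length P)%nat. split.
      + apply Nat.mod_upper_bound; lia.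
      + destruct (pvert_mod P i HP) as [-> ->]. apply linept_seg; auto.
    - intros s _ Ha Hb. eapply bd_disjoint; eauto.
    - rewrite linept0. auto. }
  assert (Hall : forall i, A (pvert P i)).
  { induction i; auto. rewrite <- (linept1 (pvert P i)). apply Hedge; auto; lra. }
  intros x [i [Hi Hx]]. apply in_seg_iff in Hx as [l [Hl [E1 [E2 E3]]]].
  replace x with (linept (pvert P i) (pvert P (S i)) l).
  - apply Hedge; auto.
  - apply pt_ext; unfold linept; simpl; lra.
Qed.


Open Scope nat_scope.

Definition mapT (h : nat -> nat) (T : nat*nat*nat) : nat*nat*nat :=
  match T with (a,b,c) => (h a, h b, h c) end.

Section Relabel.
Variables (nv : nat) (vert : nat -> pt) (tris : list (nat*nat*nat)) (a0 : nat).
Hypothesis HS : is_tri_surface nv vert tris.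

Definition cb := compb tris a0.
Definition L0 := filter cb (seq 0 nv).
Definition nv' := length L0.
Definition psi i := nth i L0 0.
Definition phi v := length (filter cb (seq 0 v)).
Definition T0 := tris0 tris a0.
Definition tris' := map (mapT phi) T0.
Definition vert' i := vert (psi i).
Definition U v := v < nv /\ compS tris a0 v.

Lemma r1 v : U v -> phi v < nv' /\ psi (phi v) = v.
Proof.
  intros [Hv Hc]. unfold nv', psi, phi, L0.
  replace nv with (v + S (nv - v - 1)) by lia.
  rewrite seq_app. simpl. rewrite filter_app. simpl.
  assert (cb v = true) as -> by (apply compb_iff; auto).
  rewrite length_app. simpl. split; [lia|].
  rewrite app_nth2; [|lia]. rewrite Nat.sub_diag. reflexivity.
Qed.

Lemma L0_nodup : NoDup L0.
Proof. apply NoDup_filter, seq_NoDup. Qed.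

Lemma r2 i : i < nv' -> U (psi i) /\ phi (psi i) = i.
Proof.
  intros Hi. assert (Hin : In (psi i) L0) by (apply nth_In; auto).
  unfold L0 in Hin. apply filter_In in Hin as [Hs Hc]. apply in_seq in Hs.
  assert (HU : U (psi i)) by (split; [lia|apply compb_iff; auto]).
  split; auto. destruct (r1 _ HU) as [Hlt He].
  apply (proj1 (NoDup_nth L0 0) L0_nodup); auto.
Qed.

Lemma r3 u v : U u -> U v -> phi u = phi v -> u = v.
Proof.
  intros Hu Hv E. destruct (r1 _ Hu) as [_ E1]. destruct (r1 _ Hv) as [_ E2].
  rewrite <- E1, <- E2, E. auto.
Qed.

Lemma T0_U T w : In T T0 -> tri_has T w = true -> U w.
Proof.
  intros HT Hw. split.
  - apply tris0_in in HT as [HT _]. destruct T as [[a b] c].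
    destruct (tri_wf _ _ _ HS a b c HT) as [? [? [? _]]]. rewrite tri_has3 in Hw. lia.
  - eapply tris0_all; eauto.
Qed.

Lemma K1 T i : In T T0 -> (tri_has (mapT phi T) i = true <-> i < nv' /\ tri_has T (psi i) = true).
Proof.
  intros HT. assert (HU : forall w, tri_has T w = true -> U w) by (intros; eapply T0_U; eauto).
  destruct T as [[a b] c]. simpl.
  assert (Ua : U a) by (apply HU; apply tri_has3; auto).
  assert (Ub : U b) by (apply HU; apply tri_has3; auto).
  assert (Uc : U c) by (apply HU; apply tri_has3; auto).
  destruct (r1 _ Ua) as [la ea], (r1 _ Ub) as [lb eb], (r1 _ Uc) as [lc ec].
  rewrite !tri_has3. split.
  - intros [->|[->| ->]]; split; auto; try rewrite ea; try rewrite eb; try rewrite ec; auto.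
  - intros [Hi Hm]. destruct (r2 i Hi) as [_ E]. rewrite <- E.
    destruct Hm as [->|[->| ->]]; auto.
Qed.

Lemma K2 T u : In T T0 -> U u -> tri_has (mapT phi T) (phi u) = tri_has T u.
Proof.
  intros HT Hu. destruct (r1 _ Hu) as [Hl E]. apply eq_true_iff_eq.
  rewrite K1 by auto. rewrite E. tauto.
Qed.

Lemma ec_pos_lt a b : 0 < edge_count tris' a b -> a < nv' /\ b < nv'.
Proof.
  intros H. destruct (edge_count_pos _ _ _ H) as [T' [HT' [Ha Hb]]].
  unfold tris' in HT'. apply in_map_iff in HT' as [T [<- HT]].
  apply K1 in Ha; auto. apply K1 in Hb; auto. tauto.
Qed.

Lemma ecT a b : a < nv' -> b < nv' -> edge_count tris' a b = edge_count T0 (psi a) (psi b).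
Proof.
  intros Ha Hb. unfold edge_count, tris'. rewrite length_filter_map. f_equal.
  apply filter_ext_in. intros T HT.
  apply eq_true_iff_eq. rewrite !andb_true_iff, !K1 by auto. tauto.
Qed.

Lemma psi_inj a b : a < nv' -> b < nv' -> psi a = psi b -> a = b.
Proof.
  intros Ha Hb E. destruct (r2 a Ha) as [_ Ea]. destruct (r2 b Hb) as [_ Eb].
  rewrite <- Ea, <- Eb, E. auto.
Qed.

Lemma tri_list_mapT T : tri_list (mapT phi T) = map phi (tri_list T).
Proof. destruct T as [[a b] c]; reflexivity. Qed.

Lemma map_vert'_phi l : (forall u, In u l -> U u) -> map vert' (map phi l) = map vert l.
Proof.
  intros H. rewrite map_map. apply map_ext_in. intros u Hu. unfold vert'.
  destruct (r1 u (H u Hu)) as [_ ->]. auto.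
Qed.

Lemma common_mapT T1 T2 : In T1 T0 -> In T2 T0 ->
  common_verts (mapT phi T1) (mapT phi T2) = map phi (common_verts T1 T2).
Proof.
  intros H1 H2. unfold common_verts. rewrite tri_list_mapT, filter_map_swap. f_equal.
  apply filter_ext_in. intros u Hu. apply K2; auto.
  apply (T0_U T1); auto. apply tri_has_In; auto.
Qed.

Lemma link_transport v a b : U v -> link_adj tris v a b -> link_adj tris' (phi v) (phi a) (phi b).
Proof.
  intros Hv [T [HT [Hv' [Ha [Hb [nav [nbv nab]]]]]]].
  assert (HT0 : In T T0) by (apply (tris0_of tris a0 T v HT Hv'); apply Hv).
  assert (Ua : U a) by (eapply T0_U; eauto).
  assert (Ub : U b) by (eapply T0_U; eauto).
  exists (mapT phi T). split; [apply in_map; auto|].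
  rewrite !K2 by auto. repeat split; auto; intros E; apply r3 in E; auto.
Qed.

Lemma adj_transport a b : compS tris a0 a -> adjS tris a b ->
  compS tris a0 b /\
  (exists T, In T tris' /\ tri_has T (phi a) = true /\ tri_has T (phi b) = true).
Proof.
  intros Ha [T [HT [Ha' Hb']]].
  assert (HT0 : In T T0) by (apply (tris0_of tris a0 T a HT Ha' Ha)).
  split; [apply (comp_tri tris a0 T a b); auto|].
  exists (mapT phi T). split; [apply in_map; auto|].
  rewrite (K2 T a HT0 (T0_U T a HT0 Ha')), (K2 T b HT0 (T0_U T b HT0 Hb')). auto.
Qed.

Lemma bd_equiv x : surface_boundary vert' tris' x <-> surface_boundary vert T0 x.
Proof.
  split.
  - intros [a [b [nab [E S]]]].
    destruct (ec_pos_lt a b) as [Ha Hb]; [lia|].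
    exists (psi a), (psi b). rewrite <- ecT by auto. repeat split; auto.
    intros E'. apply psi_inj in E'; auto.
  - intros [a [b [nab [E S]]]].
    destruct (edge_count_pos T0 a b) as [T [HT [Ha Hb]]]; [lia|].
    assert (Ua : U a) by (eapply T0_U; eauto).
    assert (Ub : U b) by (eapply T0_U; eauto).
    destruct (r1 a Ua) as [la ea]. destruct (r1 b Ub) as [lb eb].
    exists (phi a), (phi b). rewrite ecT by auto. rewrite ea, eb. unfold vert'.
    rewrite ea, eb. repeat split; auto. intros E'. apply r3 in E'; auto.
Qed.

Lemma relabel_surface : is_tri_surface nv' vert' tris'.
Proof.
  pose proof HS as HS'.
  destruct HS' as [HW [Hinj [Hcov [Hnd [Hemb [HE HL]]]]]].
  refine (conj _ (conj _ (conj _ (conj _ (conj _ (conj _ _)))))).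
  - intros a b c H. unfold tris' in H. apply in_map_iff in H as [[[x y] z] [E HT]].
    simpl in E. injection E as <- <- <-.
    assert (Ux : U x) by (eapply T0_U; eauto; apply tri_has3; auto).
    assert (Uy : U y) by (eapply T0_U; eauto; apply tri_has3; auto).
    assert (Uz : U z) by (eapply T0_U; eauto; apply tri_has3; auto).
    destruct (r1 _ Ux) as [lx ex], (r1 _ Uy) as [ly ey], (r1 _ Uz) as [lz ez].
    repeat split; auto.
    unfold vert'. rewrite ex, ey, ez.
    apply tris0_in in HT as [HT _]. apply (HW x y z HT).
  - intros u v Hu Hv E. unfold vert' in E. destruct (r2 u Hu) as [[? _] _].
    destruct (r2 v Hv) as [[? _] _]. apply Hinj in E; auto. apply psi_inj; auto.
  - intros v Hv. destruct (r2 v Hv) as [[Hl Hc] E].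
    destruct (Hcov _ Hl) as [T [HT Ht]].
    assert (HT0 : In T T0) by (eapply tris0_of; eauto).
    exists (mapT phi T). split; [apply in_map; auto|]. rewrite <- E, K2; auto. split; auto.
  - apply (FOP_pw (fun T1 T2 => exists v, tri_has T1 v <> tri_has T2 v) (0,0,0) tris');
      [intros x y [w Hw]; exists w; auto|].
    unfold tris'. apply (FOP_map (fun T1 T2 => exists v, tri_has T1 v <> tri_has T2 v)).
    + apply FOP_filter. apply (pw_FOP _ (0,0,0)). intros i j Hi Hj Hij. apply Hnd; auto.
    + intros T1 T2 H1 H2 [w Hw].
      assert (Uw : U w).
      { destruct (tri_has T1 w) eqn:E1. { exact (T0_U T1 w H1 E1). }
        destruct (tri_has T2 w) eqn:E2. { exact (T0_U T2 w H2 E2). } congruence. }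
      exists (phi w). rewrite !K2; auto.
  - intros T1' T2' H1 H2 x. unfold tris' in H1, H2.
    apply in_map_iff in H1 as [T1 [<- H1]]. apply in_map_iff in H2 as [T2 [<- H2]].
    assert (HU1 : forall u, In u (tri_list T1) -> U u)
      by (intros u Hu; apply (T0_U T1 u H1); apply tri_has_In; auto).
    assert (HU2 : forall u, In u (tri_list T2) -> U u)
      by (intros u Hu; apply (T0_U T2 u H2); apply tri_has_In; auto).
    assert (HU3 : forall u, In u (common_verts T1 T2) -> U u).
    { intros u Hu. unfold common_verts in Hu. apply filter_In in Hu. apply HU1; tauto. }
    rewrite (common_mapT T1 T2 H1 H2), !tri_list_mapT.
    rewrite (map_vert'_phi _ HU1), (map_vert'_phi _ HU2), (map_vert'_phi _ HU3).
    apply tris0_in in H1 as [H1 _]. apply tris0_in in H2 as [H2 _]. apply Hemb; auto.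
  - intros a b nab.
    destruct (Nat.eq_dec (edge_count tris' a b) 0) as [E|E]; [lia|].
    destruct (ec_pos_lt a b) as [Ha Hb]; [lia|].
    rewrite ecT by auto. eapply Nat.le_trans; [apply ec0_le|]. apply HE.
    intros E'. apply psi_inj in E'; auto.
  - intros v x y Hv nvx nvy Hx Hy.
    destruct (ec_pos_lt v x Hx) as [_ Hxl]. destruct (ec_pos_lt v y Hy) as [_ Hyl].
    rewrite ecT in Hx, Hy by auto.
    pose proof (ec0_le tris a0 (psi v) (psi x)). pose proof (ec0_le tris a0 (psi v) (psi y)).
    destruct (r2 v Hv) as [[Hvl Hvc] Ev]. destruct (r2 x Hxl) as [_ Ex].
    destruct (r2 y Hyl) as [_ Ey].
    assert (Hr : clos_refl_trans _ (link_adj tris (psi v)) (psi x) (psi y)).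
    { unfold T0 in Hx, Hy. apply HL. all: try assumption. all: try lia. all: intros E'; apply psi_inj in E'; auto. }
    rewrite <- Ex, <- Ey.
    apply (rt_map (link_adj tris (psi v)) (link_adj tris' v) phi (fun _ => True)); auto.
    intros a b _ Hab. split; auto. rewrite <- Ev. apply link_transport; auto. split; auto.
Qed.

Definition R2 (p q : nat*nat*nat * bool) := forall e, In e (dir_edges (fst p) (snd p)) ->
  ~ In e (dir_edges (fst q) (snd q)).

Lemma dir_map T b : dir_edges (mapT phi T) b =
  map (fun e => (phi (fst e), phi (snd e))) (dir_edges T b).
Proof. destruct T as [[x y] z]; destruct b; reflexivity. Qed.

Lemma dir_in T b x y : In (x,y) (dir_edges T b) -> tri_has T x = true /\ tri_has T y = true.
Proof.
  destruct T as [[p q] r]; rewrite !tri_has3; destruct b; simpl;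
  intros H; repeat destruct H as [H|H]; try injection H as <- <-; tauto.
Qed.

Lemma relabel_oriented : oriented_surface tris -> oriented_surface tris'.
Proof.
  intros [o Ho].
  set (dflt := ((0,0,0), false) : nat*nat*nat*bool).
  set (C := combine tris (map o (seq 0 (length tris)))).
  assert (Hlen : length tris = length (map o (seq 0 (length tris))))
    by (rewrite length_map, length_seq; auto).
  assert (HC : pw R2 dflt C).
  { intros i j Hi Hj Hij. unfold C in *. rewrite length_combine, <- Hlen, Nat.min_id in Hi, Hj.
    unfold dflt. rewrite !combine_nth by auto.
    rewrite (nth_indep _ (n:=i) false (o 0)), (nth_indep _ (n:=j) false (o 0)) by (rewrite <- Hlen; auto).
    rewrite !map_nth, !seq_nth by auto. simpl. intros e. apply Ho; auto. }
  set (C' := map (fun p => (mapT phi (fst p), snd p)) (filter (fun p => inC tris a0 (fst p)) C)).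
  assert (Emap : map fst C' = tris').
  { unfold C', tris', T0, tris0. rewrite map_map. simpl.
    rewrite <- (map_map fst (mapT phi)). f_equal. rewrite map_fst_filter. f_equal.
    apply map_fst_combine; auto. }
  assert (HC' : ForallOrdPairs R2 C').
  { apply (FOP_map R2); [apply FOP_filter, (pw_FOP _ dflt); auto|].
    intros [T1 b1] [T2 b2] H1 H2 HR e He1 He2. simpl in *.
    apply filter_In in H1 as [H1 F1]. apply filter_In in H2 as [H2 F2]. simpl in F1, F2.
    assert (I1 : In T1 T0) by (apply filter_In; split; auto; apply in_combine_l in H1; auto).
    assert (I2 : In T2 T0) by (apply filter_In; split; auto; apply in_combine_l in H2; auto).
    rewrite dir_map in He1, He2. apply in_map_iff in He1 as [[x1 y1] [E1 D1]].
    apply in_map_iff in He2 as [[x2 y2] [E2 D2]]. simpl in E1, E2. rewrite <- E2 in E1.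
    injection E1 as Ex Ey.
    destruct (dir_in _ _ _ _ D1) as [X1 Y1]. destruct (dir_in _ _ _ _ D2) as [X2 Y2].
    apply r3 in Ex; [|exact (T0_U T1 x1 I1 X1)|exact (T0_U T2 x2 I2 X2)].
    apply r3 in Ey; [|exact (T0_U T1 y1 I1 Y1)|exact (T0_U T2 y2 I2 Y2)].
    subst. apply (HR (x2,y2)); auto. }
  exists (fun i => snd (nth i C' dflt)).
  intros i j Hi Hj Hij.
  rewrite <- Emap, length_map in Hi, Hj. rewrite <- Emap.
  change (0,0,0) with (fst dflt). rewrite !map_nth.
  apply (FOP_pw R2 dflt C'); auto.
  intros x y H e H1 H2. apply (H e); auto.
Qed.

Lemma relabel_connected : connected_surface nv' tris'.
Proof.
  intros a b Ha Hb. destruct (r2 a Ha) as [[_ Ca] Ea]. destruct (r2 b Hb) as [[_ Cb] Eb].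
  rewrite <- Ea, <- Eb.
  apply (rt_map (adjS tris) _ phi (compS tris a0)); auto.
  - intros x y Hx Hxy. apply adj_transport; auto.
  - eapply rt_trans; [apply rt_sym; [|exact Ca]|exact Cb].
    intros x y [T [? [? ?]]]. exists T; auto.
Qed.

Lemma bd_T0 x : surface_boundary vert T0 x <-> BdQ vert tris (fun a _ => compS tris a0 a) x.
Proof.
  split.
  - intros [a [b [nab [E S]]]].
    destruct (edge_count_pos T0 a b) as [T [HT [Ha _]]]; [lia|].
    assert (Ca : compS tris a0 a) by (eapply tris0_all; eauto).
    exists a, b. unfold T0 in E. rewrite ec0 in E; auto.
  - intros [a [b [Ca [nab [E S]]]]]. exists a, b. unfold T0. rewrite ec0; auto.
Qed.

End Relabel.


Open Scope R_scope.

Theorem lemma3p1 (P : list pt) (g : Z) (nv : nat) (vert : nat -> pt)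
    (tris : list (nat * nat * nat)) :
  embedded_polygon P ->
  is_knot_genus P g ->
  is_tri_surface nv vert tris ->
  oriented_surface tris ->
  (forall x, surface_boundary vert tris x <-> polygon_set P x) ->
  (4 * g + 1 <= Z.of_nat (length tris))%Z.
Proof.
  intros HP Hg HS HO HB.
  assert (HlP : (0 < length P)%nat) by (destruct HP as [H _]; lia).
  assert (H0 : polygon_set P (pvert P 0)).
  { exists 0%nat. split; auto.
    pose proof (linept_seg (pvert P 0) (pvert P 1) 0 ltac:(lra)) as Hs.
    rewrite linept0 in Hs. exact Hs. }
  apply HB in H0 as [a0 [b0 [nab [E0 S0]]]].
  assert (HA0 : BdQ vert tris (fun a _ => compS tris a0 a) (pvert P 0)).
  { exists a0, b0. repeat split; auto. apply rt_refl. }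
  set (nv1 := nv' nv tris a0). set (vert1 := vert' nv vert tris a0).
  set (tris1 := tris' tris a0).
  assert (Hsurf : is_tri_surface nv1 vert1 tris1) by (apply relabel_surface; auto).
  assert (Hseif : seifert_surface P nv1 vert1 tris1).
  { split; [auto|split; [apply (relabel_oriented nv vert); auto|split]].
    - apply (relabel_connected nv vert); auto.
    - intros x. unfold vert1, tris1. rewrite (bd_equiv nv vert tris a0 HS), bd_T0. split.
      + intros [a [b [_ [n [E S]]]]]. apply HB. exists a, b; auto.
      + apply (propagate nv vert tris a0 P); auto. }
  assert (Hne : tris1 <> []).
  { destruct (edge_count_pos tris a0 b0) as [T [HT [Ha _]]]; [lia|].
    assert (In T (T0 tris a0)) by (apply (tris0_of tris a0 T a0); auto; apply rt_refl).
    unfold tris1, tris'. destruct (T0 tris a0); simpl in *; [tauto|congruence]. }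
  destruct Hg as [_ Hmin].
  pose proof (Hmin P nv1 vert1 tris1 (rst_refl _ _ P) Hseif) as Hg.
  pose proof (counting_bound nv1 vert1 tris1 Hsurf Hne) as Hc.
  assert (Hl : (length tris1 <= length tris)%nat).
  { unfold tris1, tris', T0, tris0. rewrite length_map. apply filter_length_le. }
  lia.
Qed.
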